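(* For all integers $n \geq k \geq 1$ and $m \geq 1$, let $\Sigma = \{0,1,\dots,m\}$ and let $\Sigma^{n \times k}$ be the $(m+1)^n \times (m+1)^k$ binary matrix with rows indexed by $x \in \Sigma^n$, columns indexed by $y \in \Sigma^k$, and entry $(x,y)$ equal to $1$ if $y$ is a subsequence of $x$ and $0$ otherwise. Then $\operatorname{rank}(\Sigma^{n \times k}) = (m+1)^k$.
   Context: A string $y$ of length $k$ is a subsequence of a string $x$ of length $n$ if there exist indices $i_1 < \dots < i_k$ with $x_{i_j} = y_j$ for all $j$. Rank is over the reals. *)

(* Defs.v *)
From mathcomp Require Import all_boot all_order all_algebra.
From mathcomp Require Import reals.
Set Implicit Arguments. Unset Strict Implicit. Unset Printing Implicit Defensive.
Import GRing.Theory Num.Theory.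
Local Open Scope ring_scope.

(* Alphabet Sigma = {0,...,m} is 'I_m.+1; words of length n are n.-tuples.
   seq.subseq y x holds iff y is obtained from x by selecting a
   subsequence of positions (x = mask b y for some bitmask), i.e. the usual
   (not necessarily contiguous) subsequence relation. *)

Definition subseq_mx (R : nzRingType) (m n k : nat) :
  'M[R]_(#|{: n.-tuple 'I_m.+1}|, #|{: k.-tuple 'I_m.+1}|) :=
  \matrix_(i, j) (subseq (val (enum_val j : k.-tuple 'I_m.+1))
                         (val (enum_val i : n.-tuple 'I_m.+1)))%:R.

(* Main.v *)
Require Import Defs.
From mathcomp Require Import all_boot all_order all_algebra.
From mathcomp Require Import reals.
From mathcomp Require Import zify.
Set Implicit Arguments. Unset Strict Implicit. Unset Printing Implicit Defensive.
Import GRing.Theory Num.Theory.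
Local Open Scope ring_scope.

Section Comb.
Local Open Scope nat_scope.
Variable T : eqType.

Lemma subseq_nseq_cat (c : T) r y s : subseq s (nseq r c ++ y) ->
  exists t w, [/\ (t <= r)%N, s = nseq t c ++ w & subseq w y].
Proof.
elim: r s => [|r IH] s /=; first by move=> h; exists 0%N, s.
case: s => [|a s] /=; first by move=> _; exists 0%N, [::]; rewrite sub0seq.
case: eqP => [-> | _] h.
  have [t [w [ht -> hw]]] := IH _ h; by exists t.+1, w.
have [t [w [ht e hw]]] := IH _ h; exists t, w; split => //; exact: leqW.
Qed.

Lemma find_nseq_cat (c : T) t w :
  find (predC1 c) (nseq t c ++ w) = (t + find (predC1 c) w)%N.
Proof. by elim: t => //= t ->; rewrite eqxx. Qed.

Lemma nseq_find_drop (c : T) y :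
  y = nseq (find (predC1 c) y) c ++ drop (find (predC1 c) y) y.
Proof.
elim: y => //= a y IH; case: eqP => [->|_] /=; [by rewrite -IH | by []].
Qed.

Definition mu (s : seq T) := if s is a :: _ then find (predC1 a) s else 0%N.

Lemma mu_le s : (mu s <= size s)%N.
Proof. case: s => //= a s; exact: (find_size (predC1 a) (a :: s)). Qed.

Lemma key (c : T) r y0 y' : size y' = size (c :: y0) ->
  subseq y' (nseq r c ++ c :: y0) -> y' = c :: y0 \/ (mu (c :: y0) < mu y')%N.
Proof.
set y := c :: y0 => hs hsub.
have [t [w [_ ey' hw]]] := subseq_nseq_cat hsub.
case: t ey' => [|t] ey'.
  left; rewrite ey' /=; apply/eqP.
  rewrite -(size_subseq_leqif hw); by rewrite -hs ey'.
have muy : mu y = find (predC1 c) y by [].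
have muy' : mu y' = find (predC1 c) y' by rewrite ey'.
set s := find (predC1 c) y in muy.
set v := drop s y.
have ey : y = nseq s c ++ v by exact: nseq_find_drop.
have fv : find (predC1 c) v = 0%N.
  have h : find (predC1 c) y = (s + find (predC1 c) v)%N by rewrite {1}ey find_nseq_cat.
  rewrite -/s in h; lia.
rewrite ey in hw.
have [a [w' [ha ew hw']]] := subseq_nseq_cat hw.
have hsz : (t.+1 + a + size w' = s + size v)%N.
  by move: hs; rewrite ey' ew ey !size_cat !size_nseq; lia.
have := size_subseq_leqif hw'; case => le eq.
move: le; rewrite leq_eqVlt => /orP [/eqP e | lt].
  have wv : w' = v by apply/eqP; rewrite -eq e.
  left; rewrite ey' ew wv catA -!nseqD ey; congr (nseq _ _ ++ _).
  by move: hsz; rewrite e => /eqP; rewrite eqn_add2r => /eqP.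
right; rewrite muy muy' ey' ew catA -nseqD find_nseq_cat.
apply: (@leq_trans (t.+1 + a)%N); last exact: leq_addr.
lia.
Qed.
End Comb.

Theorem mainTheorem3 (R : realType) (n k m : nat) :
  (1 <= k)%N -> (k <= n)%N -> (1 <= m)%N ->
  \rank (subseq_mx R m n k) = (m.+1 ^ k)%N.
Proof.
move=> k1 kn _.
set A := subseq_mx R m n k.
rewrite -mxrank_tr.
suff /eqP -> : row_free A^T by rewrite card_tuple card_ord.
apply: inj_row_free => v hv.
pose Y (j : 'I_#|{: k.-tuple 'I_m.+1}|) := val (enum_val j : k.-tuple 'I_m.+1).
have sY j : size (Y j) = k by rewrite /Y size_tuple.
suff H : forall N j, (k < mu (Y j) + N)%N -> v 0 j = 0.
  apply/rowP => j; rewrite mxE; apply: (H k.+1); lia.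
elim=> [|N IH] j hj.
  have := mu_le (Y j); rewrite sY; lia.
case eY: (Y j) (sY j) => [|c y0] sy; first by move: sy k1 => /= h; lia.
have sx : size (nseq (n - k) c ++ Y j) == n by rewrite size_cat size_nseq sY; apply/eqP; lia.
pose x := Tuple sx.
have := congr1 (fun M : 'M_(_, _) => M 0 (enum_rank x)) hv.
rewrite !mxE (bigD1 j) //= big1.
  by rewrite !mxE enum_rankK /= (suffix_subseq _ (Y j)) mulr1 addr0.
move=> j' nj'; rewrite !mxE enum_rankK.
case sub: (subseq _ _); last by rewrite mulr0.
have s' : size (Y j') = size (c :: y0) by rewrite sY sy.
have sub' : subseq (Y j') (nseq (n - k) c ++ c :: y0) by rewrite -eY.
have [e|lt] := key s' sub'.
  by case/eqP: nj'; apply: enum_val_inj; apply: val_inj; rewrite /= -/(Y j') -/(Y j) e eY.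
rewrite (IH j') ?mul0r //; move: hj lt; rewrite eY.
move=> h1 h2; exact: leq_trans h1 (leq_add2r N _ _ ) _ || (apply: leq_trans h1 _; rewrite addnS -addSn leq_add2r; exact: h2).
Qed.
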